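(* For all integers $n,d,k\ge0$, $T(n,\omega^d\cdot k)\le P(n,\omega^d\cdot k)$.
   Context: $[c]=\{1,\dots,c\}$; ordinals are identified with sets of smaller ordinals; $\approx$ is order-equivalence; $\binom{S}{n}$ is the set of $n$-element subsets. $T(n,S)$ is the least $t\in\mathbb{N}$ such that for every $c\ge1$ and every $\mathrm{COL}:\binom{S}{n}\to[c]$ there is $S'\subseteq S$, $S'\approx S$, with $|\mathrm{COL}(\binom{S'}{n})|\le t$ ($\infty$ if none). Every $\beta<\omega^d\cdot k$ is uniquely $\omega^d b+\sum_{j<d}\omega^j a_j$ with $0\le b<k$, $a_j\in\mathbb{N}$. A coloring rule (CR) on $\binom{\omega^d\cdot k}{n}$ is a pair $(\mathcal{Y},\preceq)$ with $\mathcal{Y}:\{1,\dots,n\}\to\{0,\dots,k-1\}$ and $\preceq$ a total preorder on $I=\{(i,j):1\le i\le n,0\le j<d\}$ (with induced equivalence $\equiv$ and strict part $\prec$) such that: (1) if $d\ge1$, $(i,0)\prec(i',0)$ for $i<i'$; if $d=0$, $\mathcal{Y}(i)<\mathcal{Y}(i')$ for $i<i'$; (2) $(i,j)\equiv(i',j)$ for some $j$ implies $\mathcal{Y}(i)=\mathcal{Y}(i')$; (3) $(i,j)\prec(i,j')$ for $j>j'$; (4) $(i,j)\equiv(i',j')$ implies $j=j'$; (5) for $j>0$, $(i,j)\not\equiv(i',j)$ implies $(i,j-1)\not\equiv(i',j-1)$. $P(n,\omega^d\cdot k)$ is the total number of CRs on $\binom{\omega^d\cdot k}{n}$. *)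

(* Defs.v *)
From mathcomp Require Import all_boot.
From mathcomp Require Import finmap.
Set Implicit Arguments. Unset Strict Implicit. Unset Printing Implicit Defensive.
Local Open Scope fset_scope.

(* The ordinal omega^d * k, via Cantor normal form: beta =
   omega^d b + sum_{j<d} omega^j a_j  is encoded as (b, a) with b < k. *)
Definition Ord (d k : nat) := ('I_k * {ffun 'I_d -> nat})%type.

Definition ord_lt (d k : nat) (x y : Ord d k) : bool :=
  (x.1 < y.1) ||
  ((x.1 == y.1) &&
   [exists j : 'I_d, (x.2 j < y.2 j) &&
      [forall j' : 'I_d, (j < j') ==> (x.2 j' == y.2 j')]]).

Definition order_equiv_full (d k : nat) (S' : Ord d k -> Prop) : Prop :=
  exists g : Ord d k -> Ord d k,
    [/\ forall x, S' (g x),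
        forall y, S' y -> exists x, g x = y,
        injective g &
        forall x y, ord_lt x y <-> ord_lt (g x) (g y)].

(* "T(n, omega^d*k) <= t" holds iff this property holds for t
   (it is monotone in t). *)
Definition T_good (n d k t : nat) : Prop :=
  forall (c : nat) (COL : {fset Ord d k} -> nat),
    1 <= c ->
    (forall A : {fset Ord d k}, #|` A| = n -> 1 <= COL A <= c) ->
    exists S' : Ord d k -> Prop,
      order_equiv_full S' /\
      exists L : {fset nat},
        #|` L| <= t /\
        forall A : {fset Ord d k},
          #|` A| = n -> (forall x, x \in A -> S' x) -> COL A \in L.

(* T(n, omega^d*k) <= m  (T may be infinite, in which case this fails). *)
Definition T_le (n d k m : nat) : Prop := exists t, t <= m /\ T_good n d k t.

(* Coloring rules.  Index i in {1..n} is represented by 'I_n (i-1),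
   the set I = {(i,j)} by 'I_n * 'I_d; the total preorder by a relation r. *)
Definition CRdata (n d k : nat) :=
  ({ffun 'I_n -> 'I_k} * {ffun ('I_n * 'I_d) * ('I_n * 'I_d) -> bool})%type.

Definition isCR (n d k : nat) (p : CRdata n d k) : bool :=
  let Y := p.1 in
  let r := fun x y : 'I_n * 'I_d => p.2 (x, y) in
  let eqv := fun x y => r x y && r y x in
  let prec := fun x y => r x y && ~~ r y x in
  [&&
      [forall x, forall y, r x y || r y x],
      [forall x, forall y, forall z, r x y ==> r y z ==> r x z],
      (if 0 < d then
         [forall i : 'I_n, forall i' : 'I_n, forall j : 'I_d,
            ((j : nat) == 0) ==> (i < i') ==> prec (i, j) (i', j)]
       else [forall i : 'I_n, forall i' : 'I_n, (i < i') ==> (Y i < Y i')]),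
      [forall i : 'I_n, forall i' : 'I_n, forall j : 'I_d,
         eqv (i, j) (i', j) ==> (Y i == Y i')],
      [forall i : 'I_n, forall j : 'I_d, forall j' : 'I_d,
         (j' < j) ==> prec (i, j) (i, j')],
      [forall x, forall y, eqv x y ==> (x.2 == y.2)] &
      [forall i : 'I_n, forall i' : 'I_n, forall j : 'I_d, forall j1 : 'I_d,
         ((j1 : nat).+1 == j) ==> ~~ eqv (i, j) (i', j) ==> ~~ eqv (i, j1) (i', j1)]].

Definition Pcount (n d k : nat) : nat := #|[pred p : CRdata n d k | isCR p]|.

(* Main.v *)
Require Import Defs.
From mathcomp Require Import all_boot.
From mathcomp Require Import finmap.
From mathcomp Require Import zify.
From Stdlib Require Import Classical ClassicalEpsilon.
Set Implicit Arguments. Unset Strict Implicit. Unset Printing Implicit Defensive.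

Definition incr (h : nat -> nat) := forall a b, a < b -> h a < h b.

Lemma incr_succ e : (forall i, e i < e i.+1) -> incr e.
Proof.
move=> H a b; elim: b => // b IH; rewrite ltnS leq_eqVlt => /orP[/eqP->|/IH h].
  exact: H.
exact: ltn_trans h (H b).
Qed.

Lemma incr_le h a b : incr h -> (h a <= h b) = (a <= b).
Proof.
move=> H; case: (leqP a b) => [|ba].
  by rewrite leq_eqVlt => /orP[/eqP->|/H/ltnW //]; rewrite leqnn.
by apply/negbTE; rewrite -ltnNge; apply: H.
Qed.

Lemma incr_lt h a b : incr h -> (h a < h b) = (a < b).
Proof. by move=> H; rewrite ltnNge [RHS]ltnNge (incr_le _ _ H). Qed.

Lemma incr_inj h : incr h -> injective h.
Proof. by move=> H a b e; apply/eqP; rewrite eqn_leq -(incr_le a b H) -(incr_le b a H) e leqnn. Qed.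

Lemma sorted_map_incr h s : incr h -> sorted ltn s -> sorted ltn (map h s).
Proof.
move=> H; case: s => //= a s; elim: s a => //= b s IH a /andP[ab Hs].
by rewrite (incr_lt _ _ H) ab IH.
Qed.

Fixpoint seqch (ch : nat -> nat) (i : nat) : nat :=
  if i is i'.+1 then ch (seqch ch i').+1 else ch 0.

Fixpoint stf (nxt : (nat -> nat) -> (nat -> nat)) (i : nat) : nat -> nat :=
  if i is i'.+1 then nxt (stf nxt i') else id.

Lemma pigeon (T : finType) (a : nat -> T) :
  exists x e, incr e /\ forall t, a (e t) = x.
Proof.
have [x Hx] : exists x, forall N, exists t, N <= t /\ a t = x.
  apply: NNPP => H.
  have H' : forall x, exists N, forall t, N <= t -> a t <> x.
    move=> x; apply: NNPP => Hn; apply: H; exists x => N; apply: NNPP => Hm.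
    apply: Hn; exists N => t Ht Hat; apply: Hm; by exists t.
  pose Nf x := proj1_sig (constructive_indefinite_description _ (H' x)).
  pose N := \max_x Nf x.
  have HN := proj2_sig (constructive_indefinite_description _ (H' (a N))).
  apply: (HN N) => //; rewrite /N.
  exact: (@leq_bigmax T Nf (a N)).
pose ch N := proj1_sig (constructive_indefinite_description _ (Hx N)).
have chP N : N <= ch N /\ a (ch N) = x
  := proj2_sig (constructive_indefinite_description _ (Hx N)).
exists x, (seqch ch); split.
  refine (@incr_succ (seqch ch) _) => i /=.
  by have [] := chP (seqch ch i).+1.
by case=> [|t] /=; [case: (chP 0) | case: (chP (seqch ch t).+1)].
Qed.

Lemma range_sorted h w : incr h -> sorted ltn w ->
  (forall u, u \in w -> exists e, h e = u) ->
  exists s, sorted ltn s /\ map h s = w.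
Proof.
elim: w => [|u w IH] Hh Hs Hr; first by exists [::].
have Hr' : forall v, v \in w -> exists e, h e = v.
  by move=> v Hv; apply: Hr; rewrite inE Hv orbT.
have [s [Hs' Hm]] := IH Hh (path_sorted Hs) Hr'.
have [e He] := Hr u (mem_head _ _).
exists (e :: s); split; last by rewrite /= He Hm.
move: Hs Hs'; rewrite -He -Hm; case: s {Hm} => [|e2 s2] //=.
by case/andP; rewrite (incr_lt _ _ Hh) => -> _ ->.
Qed.

Lemma ramsey (T : finType) M (f : seq nat -> T) : exists h, incr h /\
  exists col, forall s, sorted ltn s -> size s = M -> f (map h s) = col.
Proof.
elim: M f => [|M IH] f.
  by exists id; split => //; exists (f [::]) => s _ /size0nil ->.
have sel : forall g : seq nat -> T, {hc : (nat -> nat) * T | incr hc.1 /\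
   forall s, sorted ltn s -> size s = M -> g (map hc.1 s) = hc.2}.
  move=> g; apply: constructive_indefinite_description.
  by have [h [Hh [col Hc]]] := IH g; exists (h, col).
pose fp (g : nat -> nat) := fun s => f (g 0 :: map (fun t => g t.+1) s).
pose hs g := (sval (sel (fp g))).1.
pose nxt (g : nat -> nat) := fun t => g (hs g t).+1.
pose st := stf nxt.
pose col i := (sval (sel (fp (st i)))).2.
pose p i := st i 0.
have Hhs g : incr (hs g) by case: (svalP (sel (fp g))).
have Hst i : incr (st i).
  elim: i => [|i IH'] a b //= ab; rewrite /nxt IH' // ltnS; exact: Hhs.
have Hrange i j : i <= j -> forall t, exists u, st j t = st i u.
  elim: j => [|j IHj]; first by rewrite leqn0 => /eqP-> t; exists t.
  rewrite leq_eqVlt => /orP[/eqP-> t|]; first by exists t.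
  by rewrite ltnS => /IHj H t; apply: H.
have Hp : incr p.
  apply: incr_succ => i; rewrite /p /= /nxt Hst //.
have Hcol i s : sorted ltn s -> size s = M -> f (p i :: map (st i.+1) s) = col i.
  move=> H1 H2; case: (svalP (sel (fp (st i)))) => _ Hc.
  by rewrite /col -(Hc s H1 H2) /fp -map_comp.
have [x [e [He Hx]]] := pigeon col.
exists (fun t => p (e t)); split.
  by move=> a b ab; apply: Hp; apply: He.
exists x => s0 Hs0 Hsz0; case: s0 Hs0 Hsz0 => [|a s] //= Hs [Hsz].
set w := map _ s.
have Hw : sorted ltn w.
  apply: sorted_map_incr; last exact: path_sorted Hs.
  by move=> u v uv; apply/Hp/He.
have Hr : forall u, u \in w -> exists v, st (e a).+1 v = u.
  move=> u /mapP[b Hb ->].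
  have ab : a < b by move: (order_path_min ltn_trans Hs) => /allP; apply.
  have [v Hv] := Hrange (e a).+1 (e b) (He _ _ ab) 0.
  by exists v; rewrite /p Hv.
have [s2 [Hs2 Hm]] := range_sorted (Hst _) Hw Hr.
rewrite -Hm -(Hx a); apply: Hcol => //.
by rewrite -(size_map (st (e a).+1)) Hm size_map.
Qed.

Section OrdS.
Variables d k : nat.
Implicit Types x y z : Ord d k.

Definition afun x (t : nat) : nat :=
  match (insub t : option 'I_d) with Some j => x.2 j | None => 0 end.

Lemma afunE x (j : 'I_d) : afun x j = x.2 j.
Proof. by rewrite /afun valK. Qed.

Lemma afun_ge x t : d <= t -> afun x t = 0.
Proof.
move=> H; rewrite /afun; case: insubP => [j /= Hj Ej|//].
by move: Hj; rewrite ltnNge H.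
Qed.

Definition pre (j : nat) x : seq nat :=
  [seq afun x t | t <- iota j (d - j)] ++ [:: val x.1].

Lemma pre_cons j x : j < d -> pre j x = afun x j :: pre j.+1 x.
Proof. by move=> H; rewrite /pre -(subnSK H). Qed.

Lemma size_pre j x : size (pre j x) = (d - j).+1.
Proof. by rewrite size_cat size_map size_iota addn1. Qed.

Lemma pre_last j x : last 0 (pre j x) = x.1.
Proof. by rewrite /pre last_cat. Qed.

Lemma pre_eq j x y : x.1 = y.1 -> (forall t, j <= t -> afun x t = afun y t) ->
  pre j x = pre j y.
Proof.
move=> H1 H2; rewrite /pre H1; congr (_ ++ _); apply/eq_in_map => t.
by rewrite mem_iota => /andP[Ht _]; exact: H2.
Qed.

Lemma pre_b j x y : pre j x = pre j y -> x.1 = y.1.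
Proof. by move=> H; apply: ord_inj; rewrite -(pre_last j x) -(pre_last j y) H. Qed.

Lemma pre0_inj x y : pre 0 x = pre 0 y -> x = y.
Proof.
move=> H; have Hb := pre_b H.
have Ha : x.2 = y.2.
  apply/ffunP => j; rewrite -!afunE.
  move: H; rewrite /pre => /eqP; rewrite eqseq_cat ?size_map ?size_iota //.
  case/andP=> /eqP Hm _; have := congr1 (fun s => nth 0 s j) Hm.
  by rewrite /= !(nth_map 0) ?size_iota ?subn0 // nth_iota.
by case: x y {H} Hb Ha => [? ?] [? ?] /= -> ->.
Qed.

End OrdS.

Fixpoint Ec (s : seq nat) : nat :=
  if s is t :: s' then 2 ^ (Ec s') * t.*2.+1 else 0.

Lemma pow2odd_inj a b t u : 2 ^ a * t.*2.+1 = 2 ^ b * u.*2.+1 -> a = b /\ t = u.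
Proof.
elim: a b => [|a IH] [|b]; rewrite ?expnS ?mul1n.
- by move=> H; split => //; lia.
- rewrite -mulnA; set X := _ * _; lia.
- rewrite -mulnA; set X := _ * _; lia.
- rewrite -!mulnA => /eqP; rewrite eqn_pmul2l // => /eqP/IH [-> ->] //.
Qed.

Lemma Ec_inj : injective Ec.
Proof.
elim => [|t s IH] [|u s'] //=.
- move=> H; have: 0 < 2 ^ Ec s' * u.*2.+1 by rewrite muln_gt0 expn_gt0.
  by rewrite -H.
- move=> H; have: 0 < 2 ^ Ec s * t.*2.+1 by rewrite muln_gt0 expn_gt0.
  by rewrite H.
- by move/pow2odd_inj => [/IH -> ->].
Qed.

Lemma Ec_cons t s : Ec s < Ec (t :: s).
Proof.
rewrite /=; apply: (leq_trans (ltn_expl (Ec s) (ltnSn 1))).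
by apply: leq_pmulr.
Qed.

Lemma Ec_mono t t' s : t < t' -> Ec (t :: s) < Ec (t' :: s).
Proof. by move=> H; rewrite /= ltn_pmul2l ?expn_gt0 // ltnS ltn_double. Qed.

Section OrdS2.
Variables d k : nat.
Implicit Types x y z : Ord d k.

Lemma Epre_lt x j j' : j' < j -> j <= d -> Ec (pre j x) < Ec (pre j' x).
Proof.
elim: j => // j IH; rewrite ltnS leq_eqVlt => /orP[/eqP->|Hj] Hd.
  by rewrite (pre_cons x Hd); apply: Ec_cons.
apply: ltn_trans (IH Hj (ltnW Hd)).
by rewrite (pre_cons x Hd); apply: Ec_cons.
Qed.

Definition gmap (h : nat -> nat) x : Ord d k :=
  (x.1, [ffun j : 'I_d => h (Ec (pre j x))]).

Lemma ord_lt_irr x : ord_lt x x = false.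
Proof.
rewrite /ord_lt ltnn eqxx /=; apply/existsP => -[j]; by rewrite ltnn.
Qed.

Lemma ord_lt_asym x y : ord_lt x y -> ord_lt y x -> False.
Proof.
rewrite /ord_lt => /orP[H1|/andP[/eqP E1 /existsP[j /andP[Hj /forallP Hf]]]]
  /orP[H2|/andP[/eqP E2 /existsP[j2 /andP[Hj2 /forallP Hf2]]]].
- by move: (ltn_trans H1 H2); rewrite ltnn.
- by rewrite E2 ltnn in H1.
- by rewrite E1 ltnn in H2.
case: (ltngtP j j2) => [lt|lt|eq].
- by move/implyP: (Hf j2) => /(_ lt) /eqP E; rewrite E ltnn in Hj2.
- by move/implyP: (Hf2 j) => /(_ lt) /eqP E; rewrite E ltnn in Hj.
- have E : j = j2 by apply: val_inj.
  by subst j2; move: (ltn_trans Hj Hj2); rewrite ltnn.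
Qed.

Lemma ord_lt_total x y : x != y -> ord_lt x y || ord_lt y x.
Proof.
move=> Hne; rewrite /ord_lt.
case: (ltngtP x.1 y.1) => [//|_|E1]; first by rewrite orbT.
have E1' : x.1 = y.1 by apply: val_inj.
rewrite E1' eqxx /=.
case: (boolP [exists j : 'I_d, x.2 j != y.2 j]) => [/existsP[j0 Hj0] | /existsPn Hall];
  last first.
  case/negP: Hne; apply/eqP.
  have Ha : x.2 = y.2 by apply/ffunP => j; apply/eqP; move: (Hall j); rewrite negbK.
  by case: x y E1' Ha {E1 Hall} => [? ?] [? ?] /= -> ->.
pose P t := (t < d) && (afun x t != afun y t).
have exP : exists t, P t by exists j0; rewrite /P ltn_ord !afunE.
have ubP : forall t, P t -> t <= d by move=> t /andP[/ltnW].
have [m /andP[Hm Pm] Mmax] := ex_maxnP exP ubP.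
pose j := Ordinal Hm.
have Hup : forall j' : 'I_d, j < j' -> x.2 j' == y.2 j'.
  move=> j' Hj'; apply/negPn/negP => Hn.
  have : P j' by rewrite /P ltn_ord !afunE.
  by move/Mmax; rewrite leqNgt Hj'.
have Hfa : forall (u v : Ord d k), (forall j' : 'I_d, j < j' -> u.2 j' == v.2 j') ->
   [forall j' : 'I_d, (j < j') ==> (u.2 j' == v.2 j')].
  by move=> u v H; apply/forallP => j'; apply/implyP; apply: H.
have Pm' : x.2 j != y.2 j by rewrite -!afunE.
case: (ltngtP (x.2 j) (y.2 j)) Pm' => [lt|lt|//].
  by move=> _; apply/orP; left; apply/existsP; exists j; rewrite lt Hfa.
move=> _; apply/orP; right; apply/existsP; exists j; rewrite lt Hfa //.
by move=> j' /Hup; rewrite eq_sym.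
Qed.

Lemma gmap_lt h x y : incr h -> ord_lt x y -> ord_lt (gmap h x) (gmap h y).
Proof.
rewrite /ord_lt /= => Hh /orP[->//|/andP[/eqP E1 /existsP[j /andP[Hj /forallP Hf]]]].
apply/orP; right; rewrite E1 eqxx /=; apply/existsP; exists j; rewrite !ffunE.
have Hup : forall t, j < t -> afun x t = afun y t.
  move=> t Ht; case: (ltnP t d) => Htd; last by rewrite !afun_ge.
  move/implyP: (Hf (Ordinal Htd)) => /(_ Ht) /eqP.
  by rewrite -!afunE.
have Hpre : forall t, j < t -> pre t x = pre t y.
  move=> t Ht; apply: pre_eq E1 _ => t' H; apply: Hup; exact: leq_trans Ht H.
rewrite (pre_cons x (ltn_ord j)) (pre_cons y (ltn_ord j)) (Hpre j.+1 (ltnSn _)).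
rewrite (incr_lt _ _ Hh) Ec_mono ?afunE //=.
apply/forallP => j'; apply/implyP => Hj'; by rewrite !ffunE Hpre.
Qed.

Lemma gmap_inj h : incr h -> injective (gmap h).
Proof.
move=> Hh x y E; apply/eqP; apply: contraT => Hne.
by case/orP: (ord_lt_total Hne) => /(gmap_lt Hh); rewrite E ord_lt_irr.
Qed.

Lemma gmap_iff h x y : incr h -> ord_lt x y <-> ord_lt (gmap h x) (gmap h y).
Proof.
move=> Hh; split; first exact: gmap_lt.
move=> H; case: (eqVneq x y) => [E|Hne]; first by rewrite E ord_lt_irr in H.
case/orP: (ord_lt_total Hne) => // /(gmap_lt Hh) H2.
by case: (ord_lt_asym H H2).
Qed.

Lemma gmap_equiv h : incr h -> order_equiv_full (fun y => exists z, gmap h z = y).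
Proof.
move=> Hh; exists (gmap h); split.
- by move=> x; exists x.
- by move=> y [x <-]; exists x.
- exact: gmap_inj.
- by move=> x y; apply: gmap_iff.
Qed.

End OrdS2.
Local Open Scope fset_scope.

Lemma L1 (I : Type) (f g : I -> nat) : (forall a b, (f a <= f b) = (g a <= g b)) ->
  (forall a, exists b, f a = g b) -> forall a, g a <= f a.
Proof.
move=> Hm Hs.
suff H : forall m a, f a <= m -> g a <= f a by move=> a; exact: H (f a) a (leqnn _).
elim=> [|m IH] a Ha; rewrite leqNgt; apply/negP => Hlt;
  have [b Hb] := Hs a;
  (have Hfb : f b < f a by rewrite ltnNge Hm -ltnNge -Hb).
  by move: Ha Hfb; rewrite leqn0 => /eqP->.
have Hbm : f b <= m by rewrite -ltnS; exact: leq_trans Hfb Ha.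
by have := IH b Hbm; rewrite -Hb leqNgt Hfb.
Qed.

Lemma size_undup_map_eq (I T1 T2 : eqType) (f : I -> T1) (g : I -> T2) e :
  (forall a b, (f a == f b) = (g a == g b)) ->
  size (undup (map f e)) = size (undup (map g e)).
Proof.
move=> H; elim: e => //= a e IH.
have -> : (f a \in map f e) = (g a \in map g e).
  apply/mapP/mapP => -[b Hb E]; exists b => //; apply/eqP.
    by rewrite -H E.
  by rewrite H E.
by case: ifP => _ //=; rewrite IH.
Qed.

Lemma mem_le_sumn x s : x \in s -> x <= sumn s.
Proof.
elim: s => //= a s IH; rewrite inE => /orP[/eqP->|/IH H]; first exact: leq_addr.
exact: leq_trans H (leq_addl _ _).
Qed.

Lemma extend_sorted s M : sorted ltn s -> size s <= M ->
  exists s', [/\ sorted ltn s', size s' = M & take (size s) s' = s].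
Proof.
move=> Hs HM; exists (s ++ iota (sumn s).+1 (M - size s)); split.
- case: s Hs HM => [|a s1] Hs HM; first exact: iota_ltn_sorted.
  rewrite /= cat_path; move: Hs => /= ->.
  have Hl : last a s1 < (sumn (a :: s1)).+1 by rewrite ltnS mem_le_sumn // mem_last.
  case: (M - _) => [|m] //=; rewrite Hl /=.
  exact: (iota_ltn_sorted _ m.+1).
- by rewrite size_cat size_iota subnKC.
- exact: take_size_cat.
Qed.

Section Main.
Variables n d k : nat.
Variable x0 : Ord d k.

Definition key (x : Ord d k) : nat :=
  if d == 0 then val x.1 else \sum_(j < d | val j == 0) x.2 j.

Lemma keyE x (j : 'I_d) : val j = 0 -> key x = x.2 j.
Proof.
move=> Hj; rewrite /key.
have -> : (d == 0) = false by apply/negbTE; rewrite -lt0n -Hj ltn_ord.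
rewrite (big_pred1 j) // => i /=; rewrite -Hj; apply/eqP/eqP => [H|->//].
by apply: val_inj; rewrite /= H.
Qed.

Definition keyle := fun x y : Ord d k => key x <= key y.

Definition xsA (A : {fset Ord d k}) : seq (Ord d k) := sort keyle (enum_fset A).

Definition vv (xs : seq (Ord d k)) (q : 'I_n * 'I_d) : nat := (nth x0 xs q.1).2 q.2.

Definition pat (xs : seq (Ord d k)) : CRdata n d k :=
  ([ffun i : 'I_n => (nth x0 xs i).1], [ffun qq : ('I_n * 'I_d) * ('I_n * 'I_d) => vv xs qq.1 <= vv xs qq.2]).

Definition valseq (xs : seq (Ord d k)) : seq nat :=
  sort leq (undup [seq vv xs q | q <- enum {: 'I_n * 'I_d}]).

Definition Good (A : {fset Ord d k}) (p : CRdata n d k) (w : seq nat) :=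
  #|` A| = n /\ pat (xsA A) = p /\ valseq (xsA A) = w.

Lemma xsA_size A : size (xsA A) = #|` A|.
Proof. by rewrite size_sort. Qed.

Lemma xsA_mem A x : (x \in xsA A) = (x \in A).
Proof. by rewrite mem_sort. Qed.

Lemma xsA_uniq A : uniq (xsA A).
Proof. by rewrite sort_uniq fset_uniq. Qed.

Lemma valseq_mem xs q : vv xs q \in valseq xs.
Proof. by rewrite mem_sort mem_undup map_f // mem_enum. Qed.

Lemma uniq_Good A B p w : Good A p w -> Good B p w -> A = B.
Proof.
move=> [HA [HpA HwA]] [HB [HpB HwB]].
have Hp : pat (xsA A) = pat (xsA B) by rewrite HpA HpB.
set xa := xsA A in Hp HwA *; set xb := xsA B in Hp HwB *.
have Hm : forall q q', (vv xa q <= vv xa q') = (vv xb q <= vv xb q').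
  move=> q q'; have := congr1 (fun p : CRdata n d k => p.2 (q, q')) Hp.
  by rewrite /= !ffunE.
have HsA q : exists q', vv xa q = vv xb q'.
  have := valseq_mem xa q; rewrite HwA -HwB mem_sort mem_undup => /mapP[q' _ ->].
  by exists q'.
have HsB q : exists q', vv xb q = vv xa q'.
  have := valseq_mem xb q; rewrite HwB -HwA mem_sort mem_undup => /mapP[q' _ ->].
  by exists q'.
have Hv : forall q, vv xa q = vv xb q.
  move=> q; apply/eqP; rewrite eqn_leq (L1 Hm HsA) andbT.
  apply: (L1 (f := vv xb) (g := vv xa)) => // a b; by rewrite Hm.
have Hx : xa = xb.
  apply: (@eq_from_nth _ x0); first by rewrite !xsA_size HA HB.
  move=> i; rewrite xsA_size HA => Hi.
  have HY := congr1 (fun p : CRdata n d k => p.1 (Ordinal Hi)) Hp; rewrite /= !ffunE /= in HY.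
  have H2 : (nth x0 xa i).2 = (nth x0 xb i).2.
    by apply/ffunP => j; exact: (Hv (Ordinal Hi, j)).
  by move: HY H2; case: (nth x0 xa i) => [? ?]; case: (nth x0 xb i) => [? ?] /= -> ->.
by apply/fsetP => x; rewrite -!xsA_mem -/xa -/xb Hx.
Qed.

Definition chi (COL : {fset Ord d k} -> nat) (c : nat) (p : CRdata n d k)
  (w : seq nat) : 'I_c.+1 :=
  match excluded_middle_informative (exists A, Good A p w) with
  | left H => inord (COL (proj1_sig (constructive_indefinite_description _ H)))
  | right _ => ord0
  end.

Lemma chiE COL c A p w : Good A p w -> chi COL c p w = inord (COL A).
Proof.
move=> HA; rewrite /chi; case: excluded_middle_informative => [H|H]; last first.
  by case: H; exists A.
by rewrite (uniq_Good (proj2_sig (constructive_indefinite_description _ H)) HA).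
Qed.

Definition mcount (p : CRdata n d k) : nat :=
  size (undup [seq [ffun q' => p.2 (q, q')] | q <- enum {: 'I_n * 'I_d}]).

Lemma valseq_size xs : size (valseq xs) = mcount (pat xs).
Proof.
rewrite /valseq size_sort /mcount; apply: size_undup_map_eq => a b /=.
apply/eqP/eqP => [E|E].
  by apply/ffunP => q'; rewrite !ffunE /= E.
have := congr1 (fun F : {ffun 'I_n * 'I_d -> bool} => F a) E.
have := congr1 (fun F : {ffun 'I_n * 'I_d -> bool} => F b) E.
rewrite !ffunE /= !leqnn => H1 H2.
by apply/eqP; rewrite eqn_leq H1 -H2.
Qed.


Lemma pat_isCR h A : incr h -> #|` A| = n ->
  (forall x, x \in A -> exists z, gmap h z = x) -> isCR (pat (xsA A)).
Proof.
move=> Hh HA HS.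
set xs := xsA A.
have Hsz : size xs = n by rewrite xsA_size.
have Hz0 : forall i : 'I_n, exists z, nth x0 xs i = gmap h z.
  move=> i; have : nth x0 xs i \in A by rewrite -xsA_mem mem_nth // Hsz.
  by case/HS => z <-; exists z.
pose zf i := proj1_sig (constructive_indefinite_description _ (Hz0 i)).
have Hz (i : 'I_n) : nth x0 xs i = gmap h (zf i)
  := proj2_sig (constructive_indefinite_description _ (Hz0 i)).
have vvE (q : 'I_n * 'I_d) : vv xs q = h (Ec (pre q.2 (zf q.1))) by rewrite /vv Hz ffunE.
have YE (i : 'I_n) : (nth x0 xs i).1 = (zf i).1 by rewrite Hz.
have Hkey : forall i i' : 'I_n, i < i' -> key (nth x0 xs i) < key (nth x0 xs i').
  move=> i i' Hii'.
  have Hle : key (nth x0 xs i) <= key (nth x0 xs i').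
    apply: (@sorted_leq_nth _ keyle) => //.
    - by move=> a b c; rewrite /keyle; apply: leq_trans.
    - by move=> a; rewrite /keyle.
    - by apply: sort_sorted => a b; rewrite /keyle leq_total.
    - by rewrite inE Hsz.
    - by rewrite inE Hsz.
    - exact: ltnW.
  rewrite ltn_neqAle Hle andbT; apply/negP => /eqP Ek.
  have Hne : nth x0 xs i != nth x0 xs i'.
    by rewrite nth_uniq ?Hsz ?xsA_uniq // (ltn_eqF Hii').
  case/negP: Hne; apply/eqP.
  case: (boolP (d == 0)) => Hd.
    move: Ek; rewrite /key Hd !Hz /gmap /= => Ek.
    congr pair; first exact: ord_inj.
    by apply/ffunP => j; exfalso; have := ltn_ord j; move/eqP: Hd; lia.
  have Hd0 : 0 < d by rewrite lt0n.
  move: Ek; rewrite !(keyE _ (j := Ordinal Hd0)) // !Hz !ffunE /=.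
  by move/(incr_inj Hh)/Ec_inj/pre0_inj => ->.
rewrite /isCR /pat /=.
repeat (apply/andP; split).
- apply/forallP => a; apply/forallP => b; rewrite !ffunE /=; exact: leq_total.
- apply/forallP => a; apply/forallP => b; apply/forallP => c; rewrite !ffunE /=.
  apply/implyP => H1; apply/implyP; exact: leq_trans H1.
- case: ifP => Hd.
    apply/forallP => i; apply/forallP => i'; apply/forallP => j.
    apply/implyP => /eqP Hj; apply/implyP => Hii'; rewrite !ffunE /=.
    have H : vv xs (i, j) < vv xs (i', j).
      by rewrite /vv /= -!(keyE _ Hj); apply: Hkey.
    by rewrite (ltnW H) /= -ltnNge.
  apply/forallP => i; apply/forallP => i'; apply/implyP => Hii'; rewrite !ffunE.
  have Hd0 : d == 0 by rewrite eqn0Ngt Hd.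
  by have := Hkey i i' Hii'; rewrite /key Hd0.
- apply/forallP => i; apply/forallP => i'; apply/forallP => j; rewrite !ffunE /=.
  apply/implyP => /andP[H1 H2].
  have E : vv xs (i, j) = vv xs (i', j) by apply/eqP; rewrite eqn_leq H1 H2.
  move: E; rewrite !vvE /= => /(incr_inj Hh)/Ec_inj/pre_b E.
  by rewrite !YE E.
- apply/forallP => i; apply/forallP => j; apply/forallP => j'.
  apply/implyP => Hjj'; rewrite !ffunE /=.
  have H : vv xs (i, j) < vv xs (i, j').
    rewrite !vvE /= (incr_lt _ _ Hh); apply: Epre_lt => //; exact: ltnW (ltn_ord j).
  by rewrite (ltnW H) /= -ltnNge.
- apply/forallP => a; apply/forallP => b; rewrite !ffunE /=.
  apply/implyP => /andP[H1 H2].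
  have E : vv xs a = vv xs b by apply/eqP; rewrite eqn_leq H1 H2.
  move: E; rewrite !vvE => /(incr_inj Hh)/Ec_inj/(congr1 size); rewrite !size_pre => -[E].
  case: a b E {H1 H2} => [ia ja] [ib jb] /= E.
  apply/eqP; apply: ord_inj; move: E (ltn_ord ja) (ltn_ord jb); lia.
- apply/forallP => i; apply/forallP => i'; apply/forallP => j; apply/forallP => j1.
  apply/implyP => /eqP Hj; apply/implyP; rewrite !ffunE /=; apply: contra => /andP[H1 H2].
  have E : vv xs (i, j1) = vv xs (i', j1) by apply/eqP; rewrite eqn_leq H1 H2.
  have Hj1d : j1 < d by apply: ltn_trans (ltn_ord j); rewrite -Hj.
  move: E; rewrite !vvE /= => /(incr_inj Hh)/Ec_inj; rewrite !(pre_cons _ Hj1d) Hj.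
  by case=> _ E; rewrite E leqnn.
Qed.

Lemma main_good : T_good n d k (Pcount n d k).
Proof.
move=> c COL Hc HCOL.
pose M := n * d.
pose Phi := fun t : seq nat =>
  [ffun pm : CRdata n d k * 'I_M.+1 => chi COL c pm.1 (take pm.2 t)].
have [h [Hh [col Hcol]]] := ramsey M Phi.
exists (fun y => exists z, gmap h z = y); split; first exact: gmap_equiv.
exists [fset x in [seq val (col (p, inord (mcount p))) |
                    p <- enum [pred p : CRdata n d k | isCR p]]].
split.
  rewrite card_fseq; apply: leq_trans (size_undup _) _.
  by rewrite size_map /Pcount cardE.
move=> A HA HS.
set xs := xsA A.
have Hcr := pat_isCR Hh HA HS.
have Hw : sorted ltn (valseq xs).
  rewrite ltn_sorted_uniq_leq sort_uniq undup_uniq sort_sorted //; exact: leq_total.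
have Hr : forall u, u \in valseq xs -> exists e, h e = u.
  move=> u; rewrite mem_sort mem_undup => /mapP[q _ ->].
  have : nth x0 xs q.1 \in A by rewrite -xsA_mem mem_nth // xsA_size HA.
  by case/HS => z Hz; exists (Ec (pre q.2 z)); rewrite /vv -Hz ffunE.
have [s [Hs Hm]] := range_sorted Hh Hw Hr.
have Hsz : size s <= M.
  rewrite -(size_map h) Hm /valseq size_sort; apply: leq_trans (size_undup _) _.
  by rewrite size_map -cardE card_prod !card_ord.
have [s' [Hs' Hs'sz Htake]] := extend_sorted Hs Hsz.
have := Hcol s' Hs' Hs'sz.
move/(congr1 (fun F : {ffun CRdata n d k * 'I_M.+1 -> 'I_c.+1} =>
                F (pat xs, inord (size s)))).
rewrite ffunE /= inordK ?ltnS // -map_take Htake Hm.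
rewrite (@chiE COL c A); last by split.
rewrite -[size s](size_map h) Hm valseq_size => Hc'.
rewrite inE; apply/mapP; exists (pat xs); first by rewrite mem_enum.
rewrite -Hc' inordK //; have := HCOL A HA; case/andP => _ H; by rewrite ltnS.
Qed.

End Main.

Lemma zero_good n d : T_good n d 0 (Pcount n d 0).
Proof.
move=> c COL Hc HCOL.
exists (fun _ => True); split.
  exists id; split => //; by move=> y _; exists y.
have F0 : forall i : 'I_0, False by case.
case: n HCOL => [|m] HCOL.
  exists [fset COL fset0]; split.
    rewrite cardfs1; apply/card_gt0P.
    exists ([ffun i : 'I_0 => i], [ffun _ => true]); rewrite inE /isCR /=.
    repeat (apply/andP; split); try (case: ifP => _);
      apply/forallP => q; exfalso; first [exact: F0 q | exact: F0 q.1].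
  move=> A HA _; rewrite (cardfs0_eq HA) inE //.
exists fset0; split => // A HA _.
exfalso; case: (fset_0Vmem A) => [E|[x _]]; last exact: F0 x.1.
by move: HA; rewrite E cardfs0.
Qed.

Theorem theorem9p3 (n d k : nat) : T_le n d k (Pcount n d k).
Proof.
exists (Pcount n d k); split => //.
case: k => [|k]; first exact: zero_good.
exact: (main_good (ord0, [ffun => 0])).
Qed.
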